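(* Let $c\in\mathbb{Q}$ with $c<0$, let $n\ge1$, and let $f$ be a $c$-frieze of order $n$ over $\mathbb{Q}$. If $\Sigma\subseteq\mathbb{B}_n$ is a section such that $f(p)>0$ for every $p=(i,j)\in\Sigma$ with $-1\le j-i\le n$ (the points of $\Sigma$ in rows $0,\dots,n+1$), then $f(i,j)>0$ for all $(i,j)\in\mathbb{Z}^2$ with $-1\le j-i\le n$.
   Context: The $c$-continuant polynomials $P_k=P_k^c$ ($k\ge-1$) are defined by $P_{-1}=0$, $P_0=1$, and for $k\ge1$, $P_k(x_1,\dots,x_k)=x_kP_{k-1}(x_1,\dots,x_{k-1})+cP_{k-2}(x_1,\dots,x_{k-2})$. A family $(x_i)_{i\in\mathbb{Z}}$ of rationals is $n$-admissible if $P_{n+2}(x_i,\dots,x_{i+n+1})=0$ for all $i$. Let $\mathbb{B}_n=\{(i,j)\in\mathbb{Z}^2:-2\le j-i\le n+1\}$; the point $(i,j)$ lies in row $j-i+1$. A $c$-frieze of order $n$ over $\mathbb{Q}$ is a function $f:\mathbb{B}_n\to\mathbb{Q}$ for which there is an $n$-admissible family $(x_i)$ with $f(i,j)=P_{j-i+1}(x_i,\dots,x_j)$ for all $(i,j)\in\mathbb{B}_n$ (rows $-1$ and $n+2$ are identically $0$). A section is a subset $\Sigma\subseteq\mathbb{B}_n$ with $|\Sigma|=n+4$ such that for every $(i_0,j_0)\in\Sigma$: (a) if $(i_0,j_0-1)$ and $(i_0+1,j_0)$ lie in $\mathbb{B}_n$, at least one of them is in $\Sigma$; (b) if $(i_0-1,j_0)$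 and $(i_0,j_0+1)$ lie in $\mathbb{B}_n$, at least one of them is in $\Sigma$. *)

(* Defs.v *)
From mathcomp Require Import all_boot all_order all_algebra.
Set Implicit Arguments. Unset Strict Implicit. Unset Printing Implicit Defensive.
Import Order.TTheory GRing.Theory Num.Theory.
Local Open Scope ring_scope.

(* contpair c x i k = (P_k(x_i,...,x_{i+k-1}), P_{k-1}(x_i,...,x_{i+k-2}))
   with P_{-1} = 0, P_0 = 1, P_{k+1} = x_{i+k} P_k + c P_{k-1}. *)
Fixpoint contpair (c : rat) (x : int -> rat) (i : int) (k : nat) : rat * rat :=
  match k with
  | 0%N => (1, 0)
  | k'.+1 => let p := contpair c x i k' in
             (x (i + k'%:Z) * p.1 + c * p.2, p.1)
  end.

Definition cont (c : rat) (x : int -> rat) (i : int) (k : nat) : rat :=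
  (contpair c x i k).1.

Definition contZ (c : rat) (x : int -> rat) (i : int) (m : int) : rat :=
  match m with
  | Posz k => cont c x i k
  | Negz _ => 0
  end.

Definition admissible (c : rat) (n : nat) (x : int -> rat) : Prop :=
  forall i : int, cont c x i n.+2 = 0.

Definition inB (n : nat) (p : int * int) : bool :=
  (-2 <= p.2 - p.1) && (p.2 - p.1 <= n%:Z + 1).

(* c-frieze of order n over Q: a function on B_n (values off B_n irrelevant) *)
Definition is_frieze (c : rat) (n : nat) (f : int -> int -> rat) : Prop :=
  exists x : int -> rat, admissible c n x /\
    forall i j : int, inB n (i, j) -> f i j = contZ c x i (j - i + 1).

(* A section: a finite subset of B_n of cardinality n+4 (given as a
   duplicate-free list) satisfying conditions (a) and (b). *)
Definition is_section (n : nat) (S : seq (int * int)) : Prop :=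
  [/\ uniq S, size S = (n + 4)%N, all (inB n) S &
   forall i0 j0 : int, (i0, j0) \in S ->
     (inB n (i0, j0 - 1) -> inB n (i0 + 1, j0) ->
        ((i0, j0 - 1) \in S) || ((i0 + 1, j0) \in S)) /\
     (inB n (i0 - 1, j0) -> inB n (i0, j0 + 1) ->
        ((i0 - 1, j0) \in S) || ((i0, j0 + 1) \in S))].

(* Main.v *)
Require Import Defs.
From mathcomp Require Import all_boot all_order all_algebra.
From mathcomp Require Import zify ring lra.
Import Order.TTheory GRing.Theory Num.Theory.
Local Open Scope ring_scope.

Lemma mesh c x i k :
  (contpair c x i k).1 * (contpair c x (i+1) k).1
   - (contpair c x i k.+1).1 * (contpair c x (i+1) k).2 = (- c) ^+ k.
Proof.
elim: k => [|k IH] /=.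
  by rewrite mulr1 mulr0 subr0 expr0.
rewrite exprS -IH /=.
have -> : i + 1 + k%:Z = i + k.+1%:Z by lia.
case: (contpair c x i k) => p1 p2; case: (contpair c x (i+1) k) => q1 q2 /=.
ring.
Qed.

Lemma posR c x i k : c < 0 -> 0 < cont c x i k -> 0 <= cont c x i k.+1 ->
  0 <= (contpair c x (i+1) k).2 -> 0 < cont c x (i+1) k.
Proof.
move=> c0 a b d.
have e := mesh c x i k.
have hp : 0 < (-c) ^+ k by apply: exprn_gt0; rewrite oppr_gt0.
have : 0 < cont c x i k * cont c x (i+1) k.
  rewrite /cont -[_ * _](subrK ((contpair c x i k.+1).1 * (contpair c x (i+1) k).2)) e.
  apply: ltr_wpDr => //. exact: mulr_ge0.
by rewrite pmulr_rgt0.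
Qed.

Lemma posL c x i k : c < 0 -> 0 < cont c x (i+1) k -> 0 <= cont c x i k.+1 ->
  0 <= (contpair c x (i+1) k).2 -> 0 < cont c x i k.
Proof.
move=> c0 a b d.
have e := mesh c x i k.
have hp : 0 < (-c) ^+ k by apply: exprn_gt0; rewrite oppr_gt0.
have : 0 < cont c x i k * cont c x (i+1) k.
  rewrite /cont -[_ * _](subrK ((contpair c x i k.+1).1 * (contpair c x (i+1) k).2)) e.
  apply: ltr_wpDr => //. exact: mulr_ge0.
by rewrite pmulr_lgt0.
Qed.
Theorem mainTheorem5 (c : rat) (n : nat) (f : int -> int -> rat)
  (S : seq (int * int)) :
  c < 0 -> (1 <= n)%N -> is_frieze c n f -> is_section n S ->
  (forall i j : int, (i, j) \in S -> -1 <= j - i -> j - i <= n%:Z ->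
     0 < f i j) ->
  forall i j : int, -1 <= j - i -> j - i <= n%:Z -> 0 < f i j.
Proof.
move=> c0 n1 [x [adm Hf]] [Su Ssz SB Ssec] Hpos.
pose inS i (k : nat) := (i, i + k%:Z - 1) \in S.
have HS : forall i (k : nat), (k <= n.+1)%N -> inS i k -> 0 < cont c x i k.
  move=> i k hk hS.
  have := Hpos _ _ hS.
  rewrite Hf; last by rewrite /inB /=; apply/andP; split; lia.
  have -> : i + k%:Z - 1 - i + 1 = k%:Z by lia.
  by apply; lia.
have Sa : forall i (k : nat), (k <= n.+1)%N -> inS i k.+1 -> inS i k || inS (i+1) k.
  move=> i k hk hS.
  have [ha _] := Ssec _ _ hS.
  have e1 : i + k.+1%:Z - 1 - 1 = i + k%:Z - 1 by lia.
  have e2 : i + k.+1%:Z - 1 = i + 1 + k%:Z - 1 by lia.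
  move: ha; rewrite e1 e2 /inS; apply; rewrite /inB /=; apply/andP; split; lia.
have Sb : forall i (k : nat), (k <= n)%N -> inS i k -> inS (i-1) k.+1 || inS i k.+1.
  move=> i k hk hS.
  have [_ hb] := Ssec _ _ hS.
  have e1 : i + k%:Z - 1 = i - 1 + k.+1%:Z - 1 by lia.
  have e2 : i - 1 + k.+1%:Z - 1 + 1 = i + k.+1%:Z - 1 by lia.
  move: hb; rewrite e1 e2 /inS; apply; rewrite /inB /=; apply/andP; split; lia.
have [[i0 j0] hp0] : exists p, p \in S.
  case: (S) Ssz => [|p s] /=; [by rewrite addnS | by exists p; rewrite mem_head].
have [i1 [k1 [hk1 hS1]]] : exists i1 (k1 : nat), (k1 <= n.+1)%N /\ inS i1 k1.
  have := allP SB _ hp0; rewrite /inB /= => /andP [b1 b2].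
  case: (ltrP (j0 - i0) (-1)) => h1.
    have hA : inB n (i0 - 1, j0) by rewrite /inB /=; apply/andP; split; lia.
    have hB : inB n (i0, j0 + 1) by rewrite /inB /=; apply/andP; split; lia.
    case/orP: ((Ssec _ _ hp0).2 hA hB) => h.
      exists (i0 - 1), 0%N; split; first by []; rewrite /inS.
      by have -> : i0 - 1 + 0%:Z - 1 = j0 by lia.
    exists i0, 0%N; split; first by []; rewrite /inS.
    by have -> : i0 + 0%:Z - 1 = j0 + 1 by lia.
  case: (ltrP (j0 - i0) (n%:Z + 1)) => h2.
    exists i0, (absz (j0 - i0 + 1)); split; first lia.
    by rewrite /inS; have -> : i0 + ((absz (j0 - i0 + 1)))%:Z - 1 = j0 by lia.
  have hA : inB n (i0, j0 - 1) by rewrite /inB /=; apply/andP; split; lia.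
  have hB : inB n (i0 + 1, j0) by rewrite /inB /=; apply/andP; split; lia.
  case/orP: ((Ssec _ _ hp0).1 hA hB) => h.
    exists i0, n.+1; split; first by []; rewrite /inS.
    by have -> : i0 + n.+1%:Z - 1 = j0 - 1 by lia.
  exists (i0 + 1), n.+1; split; first by []; rewrite /inS.
  by have -> : i0 + 1 + n.+1%:Z - 1 = j0 by lia.
have Up : forall d : nat, (k1 + d <= n.+1)%N -> exists i, inS i (k1 + d)%N.
  elim=> [|d IH] hd; first by exists i1; rewrite addn0.
  have hd' : (k1 + d <= n.+1)%N by lia.
  have [i2 h2] := IH hd'.
  have hh : (k1 + d <= n)%N by lia.
  have := Sb i2 _ hh h2; rewrite addnS; case/orP => h; eexists; exact: h.
have Down : forall d : nat, (d <= k1)%N -> exists i, inS i (k1 - d)%N.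
  elim=> [|d IH] hd; first by exists i1; rewrite subn0.
  have hd' : (d <= k1)%N by lia.
  have [i2 h2] := IH hd'.
  have e : (k1 - d = (k1 - d.+1).+1)%N by lia.
  rewrite e in h2.
  have hh : (k1 - d.+1 <= n.+1)%N by lia.
  have := Sa i2 _ hh h2; case/orP => h; eexists; exact: h.
have Rows : forall k : nat, (k <= n.+1)%N -> exists i, inS i k.
  move=> k hk; case: (leqP k1 k) => h.
    by have := Up (k - k1)%N; rewrite subnKC //; apply.
  by have := Down (k1 - k)%N; rewrite subKn ?(ltnW h) //; apply; lia.
have [m Hm] : exists m : int, forall p, p \in S -> m <= p.1.
  elim: (S) => [|p s [m Hm]]; first by exists 0.
  exists (if p.1 <= m then p.1 else m) => q; rewrite in_cons => /orP [/eqP -> | /Hm].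
    by case: (leP p.1 m) => h //; apply: ltW.
  by move=> hq; case: (leP p.1 m) => h //; apply: le_trans h hq.
have [Mx HM] : exists M : int, forall p, p \in S -> p.1 <= M.
  elim: (S) => [|p s [m' Hm']]; first by exists 0.
  exists (if p.1 <= m' then m' else p.1) => q; rewrite in_cons => /orP [/eqP -> | /Hm'].
    by case: (leP p.1 m') => h //; apply: ltW.
  by move=> hq; case: (leP p.1 m') => h //; apply: le_trans hq (ltW h).
have cp2 : forall i (k : nat), (contpair c x i k.+1).2 = cont c x i k by [].
move=> a b hij1 hij2.
have [kk hkk] : exists kk : nat, b - a + 1 = kk%:Z by exists (absz (b - a + 1)); lia.
rewrite Hf; last by rewrite /inB /=; apply/andP; split; lia.
rewrite hkk /=.
have hkkn : (kk <= n.+1)%N by lia.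
have [ip hSp] := Rows kk hkkn.
have R : forall d : nat, forall k : nat, (k <= n.+1)%N -> forall i', inS i' k ->
    i' <= m + d%:Z -> 0 < cont c x (m + d%:Z) k.
  elim=> [|d IHd] k.
    move=> hk i' hS hi'. have := Hm _ hS => /= hm.
    have -> : m + 0%:Z = i' by lia. exact: HS.
  elim: k => [|k IHk] hk i' hS hi'.
  - case: (ltrP i' (m + d.+1%:Z)) => lt; last first.
      have -> : m + d.+1%:Z = i' by lia. exact: HS.
    have -> : m + d.+1%:Z = m + d%:Z + 1 by lia.
    apply: posR => //.
    have := Sb i' 0%N (leq0n _) hS => /orP [] h; apply/ltW.
      by apply: (IHd 1%N _ (i'-1)) => //; lia.
    by apply: (IHd 1%N _ i') => //; lia.
  - case: (ltrP i' (m + d.+1%:Z)) => lt; last first.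
      have -> : m + d.+1%:Z = i' by lia. exact: HS.
    have e : m + d.+1%:Z = m + d%:Z + 1 by lia.
    rewrite e; apply: posR => //.
    + by apply: (IHd k.+1 _ i') => //; lia.
    + case: (leqP k.+1 n) => hkn.
        have := Sb i' k.+1 hkn hS => /orP [] h; apply/ltW.
          by apply: (IHd k.+2 _ (i'-1)) => //; lia.
        by apply: (IHd k.+2 _ i') => //; lia.
      have -> : k.+2 = n.+2 by lia. by rewrite adm.
    + rewrite cp2 -e; apply/ltW.
      have := Sa i' k (ltnW hk) hS => /orP [] h.
        by apply: (IHk (ltnW hk) i') => //; lia.
      by apply: (IHk (ltnW hk) (i'+1)) => //; lia.
have L : forall d : nat, forall e : nat, forall k : nat, (k + e = n.+1)%N -> forall i', inS i' k ->
    Mx - d%:Z <= i' -> 0 < cont c x (Mx - d%:Z) k.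
  elim=> [|d IHd] e.
    move=> k hk i' hS hi'. have := HM _ hS => /= hm.
    have -> : Mx - 0%:Z = i' by lia. apply: HS => //; lia.
  elim: e => [|e IHe] k hk i' hS hi'.
  - case: (ltrP (Mx - d.+1%:Z) i') => lt; last first.
      have -> : Mx - d.+1%:Z = i' by lia. apply: HS => //; lia.
    have eq : Mx - d%:Z = Mx - d.+1%:Z + 1 by lia.
    apply: posL => //.
    + by rewrite -eq; apply: (IHd (n.+1 - k)%N k _ i') => //; lia.
    + have -> : k = n.+1 by lia. by rewrite adm.
    + case: k hk hS => [|k] hk hS //=.
      rewrite -eq; apply/ltW.
      have hk' : (k <= n.+1)%N by lia.
      have := Sa i' k hk' hS => /orP [] h.
        by apply: (IHd (n.+1 - k)%N k _ i') => //; lia.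
      by apply: (IHd (n.+1 - k)%N k _ (i'+1)) => //; lia.
  - case: (ltrP (Mx - d.+1%:Z) i') => lt; last first.
      have -> : Mx - d.+1%:Z = i' by lia. apply: HS => //; lia.
    have eq : Mx - d%:Z = Mx - d.+1%:Z + 1 by lia.
    apply: posL => //.
    + by rewrite -eq; apply: (IHd (n.+1 - k)%N k _ i') => //; lia.
    + have hkn : (k <= n)%N by lia.
      have := Sb i' k hkn hS => /orP [] h; apply/ltW.
        by apply: (IHe k.+1 _ (i'-1)) => //; lia.
      by apply: (IHe k.+1 _ i') => //; lia.
    + case: k hk hS => [|k] hk hS //=.
      rewrite -eq; apply/ltW.
      have hk' : (k <= n.+1)%N by lia.
      have := Sa i' k hk' hS => /orP [] h.
        by apply: (IHd (n.+1 - k)%N k _ i') => //; lia.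
      by apply: (IHd (n.+1 - k)%N k _ (i'+1)) => //; lia.
case: (leP ip a) => hi.
  have [d hd] : exists d : nat, a = m + d%:Z.
    have := Hm _ hSp => /= hm. by clear R L; exists (absz (a - m)); lia.
  rewrite hd; apply: (R d kk hkkn ip hSp); clear R L; lia.
have [d hd] : exists d : nat, a = Mx - d%:Z.
  have := HM _ hSp => /= hm. by clear R L; exists (absz (Mx - a)); lia.
rewrite hd; apply: (L d (n.+1 - kk)%N kk _ ip hSp); clear R L; lia.
Qed.
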